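(* Let $q\ge1$, let $n\ge1$ be an integer, $N=\dim\Pi_n^q$, let $\mathcal C$ be a finite set of points on $\mathbb S^q$ and $\nu$ a measure supported on $\mathcal C$ with $v_\xi:=\nu(\{\xi\})>0$, $\xi\in\mathcal C$. (a) If the Gram matrix $G_N$ is positive definite, then the weights $w^{LSQ}_\xi$ are solutions of the extremal problem: minimize $\sum_{\xi\in\mathcal C}w_\xi^2/v_\xi$ over real $(w_\xi)_{\xi\in\mathcal C}$ subject to $\sum_{\xi\in\mathcal C}w_\xi y_\ell(\xi)=\delta_{1,\ell}$ for $\ell=1,\dots,N$. (b) Suppose there are constants $c_1,c_2>0$ with $$c_1\|P\|_p\le\Big\{\sum_{\xi\in\mathcal C}v_\xi|P(\xi)|^p\Big\}^{1/p}\le c_2\|P\|_p,\qquad P\in\Pi_n^q,\ 1\le p\le\infty$$ (for $p=\infty$ the middle term means $\max_{\xi\in\mathcal C}|P(\xi)|$). Then there exist real numbers $W_\xi$, $\xi\in\mathcal C$, such that $|W_\xi|\le c\,v_\xi$ for $\xi\in\mathcal C$, with a constant $c$ depending only on $c_1$, and $\sum_{\xi\in\mathcal C}W_\xi P(\xi)=\int P\,d\mu_q$ for all $P\in\Pi_n^q$.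
   Context: $\mathbb S^q$ is the unit sphere in $\mathbb R^{q+1}$, $\mu_q$ its surface measure normalized to total mass $1$, $\|\cdot\|_p$ the $L^p(\mu_q)$ norm. $\Pi_n^q$ is the space of spherical polynomials of degree at most $n$. Let $y_1,\dots,y_N$ be an orthonormal basis of $\Pi_n^q$ with respect to $\mu_q$ consisting of orthonormal spherical harmonics, ordered with $y_1\equiv1$ and lower degrees first. The Gram matrix is $(G_N)_{\ell,k}=\sum_{\xi\in\mathcal C}v_\xi y_\ell(\xi)y_k(\xi)$. The least-squares weights are $w^{LSQ}_\xi:=v_\xi\sum_{k=1}^N(G_N^{-1})_{1,k}y_k(\xi)$. *)

(* Defs.v *)
From mathcomp Require Import all_boot all_order all_algebra.
From mathcomp Require Import all_classical all_reals all_analysis.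
Set Implicit Arguments. Unset Strict Implicit. Unset Printing Implicit Defensive.
Import Order.TTheory GRing.Theory Num.Theory.
Local Open Scope ring_scope.

Section SphereDefs.
Variable R : realType.

Definition enorm (m : nat) (x : 'rV[R]_m) : R := Num.sqrt (\sum_i x ord0 i ^+ 2).

Definition on_sphere (q : nat) (x : 'rV[R]_q.+1) : Prop := enorm x = 1.

(* iint k f = \int dx_1 ... \int dx_k f [:: x_1; ...; x_k]  (Tonelli: this is the
   Lebesgue integral on R^k for nonnegative measurable f) *)
Fixpoint iint (k : nat) (f : seq R -> \bar R) : \bar R :=
  match k with
  | 0 => f [::]
  | k'.+1 => (\int[@lebesgue_measure R]_x iint k' (fun s => f (x :: s)))%E
  end.

Definition vec_of (k : nat) (s : seq R) : 'rV[R]_k := \row_i nth 0 s i.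

Definition volint (k : nat) (f : 'rV[R]_k -> \bar R) : \bar R :=
  iint k (fun s => f (vec_of k s)).

(* \int g d mu_q = vol({ r x : 0 < r <= 1, x in S^q } weighted by g) / vol(unit ball) *)
Definition ball_ind (q : nat) (x : 'rV[R]_q.+1) : \bar R :=
  if enorm x <= 1 then 1%E else 0%E.

Definition cone_ext (q : nat) (g : 'rV[R]_q.+1 -> \bar R) (x : 'rV[R]_q.+1) : \bar R :=
  if (0 < enorm x) && (enorm x <= 1) then g ((enorm x)^-1 *: x) else 0%E.

Definition sph_int_nn (q : nat) (g : 'rV[R]_q.+1 -> \bar R) : \bar R :=
  (volint (cone_ext g) * ((fine (volint (@ball_ind q)))^-1)%:E)%E.

Definition sph_int (q : nat) (f : 'rV[R]_q.+1 -> R) : R :=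
  fine (sph_int_nn (fun x => (Num.max (f x) 0)%:E))
  - fine (sph_int_nn (fun x => (Num.max (- f x) 0)%:E)).

Definition sph_esssup (q : nat) (f : 'rV[R]_q.+1 -> R) : R :=
  inf [set M : R | 0 <= M /\
         sph_int_nn (fun x => if M < `|f x| then 1%E else 0%E) = 0%E].

Definition Lpnorm (q : nat) (p : \bar R) (f : 'rV[R]_q.+1 -> R) : R :=
  match p with
  | EFin r => (sph_int (fun x => `|f x| `^ r)) `^ r^-1
  | +oo%E => sph_esssup f
  | -oo%E => 0
  end.

Definition dnorm (q : nat) (C : seq 'rV[R]_q.+1) (v : 'rV[R]_q.+1 -> R)
    (p : \bar R) (f : 'rV[R]_q.+1 -> R) : R :=
  match p with
  | EFin r => (\sum_(xi <- C) v xi * `|f xi| `^ r) `^ r^-1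
  | +oo%E => \big[Num.max/0]_(xi <- C) `|f xi|
  | -oo%E => 0
  end.

Definition monom (q n : nat) (a : {ffun 'I_q.+1 -> 'I_n.+1}) (x : 'rV[R]_q.+1) : R :=
  \prod_i x ord0 i ^+ a i.

Definition polyfun (q n : nat) (c : {ffun 'I_q.+1 -> 'I_n.+1} -> R)
    (x : 'rV[R]_q.+1) : R :=
  \sum_(a : {ffun 'I_q.+1 -> 'I_n.+1} | (\sum_i nat_of_ord (a i) <= n)%N)
     c a * monom a x.

Definition hompolyfun (q k : nat) (c : {ffun 'I_q.+1 -> 'I_k.+1} -> R)
    (x : 'rV[R]_q.+1) : R :=
  \sum_(a : {ffun 'I_q.+1 -> 'I_k.+1} | (\sum_i nat_of_ord (a i) == k)%N)
     c a * monom a x.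

Definition in_Pi (q n : nat) (P : 'rV[R]_q.+1 -> R) : Prop :=
  exists c : {ffun 'I_q.+1 -> 'I_n.+1} -> R,
    forall x, on_sphere x -> P x = polyfun c x.

Definition harmonic (q : nat) (H : 'rV[R]_q.+1 -> R) : Prop :=
  forall x : 'rV[R]_q.+1,
    \sum_(i < q.+1)
      derive (fun z : 'rV[R]_q.+1 => derive H z (delta_mx ord0 i)) x (delta_mx ord0 i) = 0.

Definition sph_harmonic (q k : nat) (Y : 'rV[R]_q.+1 -> R) : Prop :=
  exists c : {ffun 'I_q.+1 -> 'I_k.+1} -> R, harmonic (hompolyfun c) /\
            forall x, on_sphere x -> Y x = hompolyfun c x.

(* y_0, ..., y_N is an orthonormal basis of Pi_n^q w.r.t. mu_q, consisting of
   spherical harmonics, with y_0 = 1 and lower degrees first.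
   (Dimension of Pi_n^q is N+1.) *)
Definition sph_onb (q n N : nat) (y : 'I_N.+1 -> 'rV[R]_q.+1 -> R) : Prop :=
  [/\ forall l, in_Pi n (y l),
      forall l k, sph_int (fun x => y l x * y k x) = (l == k)%:R,
      forall P, in_Pi n P ->
        exists a : 'I_N.+1 -> R, forall x, on_sphere x -> P x = \sum_l a l * y l x,
      forall x, on_sphere x -> y ord0 x = 1 &
      exists deg : 'I_N.+1 -> nat,
        (forall l k : 'I_N.+1, (l <= k)%N -> (deg l <= deg k)%N) /\
        forall l, sph_harmonic (deg l) (y l)].

Definition gram (q N : nat) (C : seq 'rV[R]_q.+1) (v : 'rV[R]_q.+1 -> R)
    (y : 'I_N.+1 -> 'rV[R]_q.+1 -> R) : 'M[R]_N.+1 :=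
  \matrix_(l, k) \sum_(xi <- C) v xi * y l xi * y k xi.

Definition posdef (m : nat) (M : 'M[R]_m) : Prop :=
  forall u : 'rV[R]_m, u != 0 -> 0 < (u *m M *m u^T) ord0 ord0.

Definition wLSQ (q N : nat) (C : seq 'rV[R]_q.+1) (v : 'rV[R]_q.+1 -> R)
    (y : 'I_N.+1 -> 'rV[R]_q.+1 -> R) (xi : 'rV[R]_q.+1) : R :=
  v xi * \sum_k (invmx (gram C v y)) ord0 k * y k xi.

End SphereDefs.

(* Main.v *)
Require Import Defs.
From mathcomp Require Import all_boot all_order all_algebra.
From mathcomp Require Import all_classical all_reals all_analysis.
From mathcomp Require Import measurable_realfun.
From mathcomp Require Import ring lra.
Import Order.TTheory GRing.Theory Num.Theory.
Local Open Scope ring_scope.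

Module Aux.
Set Implicit Arguments. Unset Strict Implicit. Unset Printing Implicit Defensive.

Section Meas.
Variable R : realType.
Definition dR : measure_display := ltac:(let T := type of (measurableTypeR R : measurableType _) in match T with Measurable.type ?d => exact d end).
Fixpoint Rkd (k : nat) : measure_display :=
  match k with 0 => dR | k.+1 => (dR, Rkd k).-prod end.
Fixpoint Rk (k : nat) : measurableType (Rkd k) :=
  match k with 0 => measurableTypeR R | k.+1 => (measurableTypeR R * Rk k)%type end.
Fixpoint seq_of (k : nat) : Rk k -> seq R :=
  match k return Rk k -> seq R with 0 => fun _ => [::] | k.+1 => fun z => z.1 :: seq_of z.2 end.

Lemma iint_ge0 k (f : seq R -> \bar R) : (forall s, 0 <= f s)%E -> (0 <= iint k f)%E.
Proof.
elim: k f => [|k IH] f f0 /=; first exact: f0.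
by apply: integral_ge0 => x _; apply: IH.
Qed.

Lemma iint_meas k : forall d (T : measurableType d) (F : T -> seq R -> \bar R),
  measurable_fun [set: (T * Rk k)%type] (fun p => F p.1 (seq_of p.2)) ->
  (forall t s, 0 <= F t s)%E ->
  measurable_fun [set: T] (fun t => iint k (F t)).
Proof.
elim: k => [|k IH] d T F mF F0 /=.
  have -> : (fun t => F t [::]) = (fun p : (T * Rk 0)%type => F p.1 (seq_of p.2)) \o (fun t => (t, (0 : R))).
    by [].
  apply: measurableT_comp => //.
pose G := fun (p : (T * measurableTypeR R)%type) (s : seq R) => F p.1 ((p.2 : R) :: s).
have mG : measurable_fun [set: (T * measurableTypeR R)%type] (fun p => iint k (G p)).
  apply: IH; last by move=> ? ?; apply: F0.
  have -> : (fun p : ((T * measurableTypeR R) * Rk k)%type => G p.1 (seq_of p.2)) =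
     (fun p : (T * Rk k.+1)%type => F p.1 (seq_of p.2)) \o (fun q : ((T * measurableTypeR R) * Rk k)%type => (q.1.1, (q.1.2, q.2))).
    by [].
  apply: measurableT_comp => //.
  apply: measurable_fun_pair.
    exact: measurableT_comp measurable_fst measurable_fst.
  apply: measurable_fun_pair.
    exact: measurableT_comp measurable_snd measurable_fst.
  exact: measurable_snd.
have := @measurable_fun_fubini_tonelli_F _ _ _ _ _ (@lebesgue_measure R) _ mG.
apply.
by move=> x; apply: iint_ge0 => s; apply: F0.
Qed.

Definition mble k (f : seq R -> \bar R) := measurable_fun [set: Rk k] (fun z => f (seq_of z)).

Lemma mble_cons k f (x : R) : mble k.+1 f -> mble k (fun s => f (x :: s)).
Proof.
move=> mf; rewrite /mble.
have -> : (fun z : Rk k => f (x :: seq_of z)) = (fun z : Rk k.+1 => f (seq_of z)) \o (pair (x : measurableTypeR R)) by [].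
exact: measurableT_comp.
Qed.

Lemma mble_sec k f : mble k.+1 f -> (forall s, 0 <= f s)%E ->
  measurable_fun [set: measurableTypeR R] (fun x => iint k (fun s => f ((x : R) :: s))).
Proof.
move=> mf f0.
apply: (@iint_meas k _ (measurableTypeR R) (fun x s => f ((x : R) :: s))) => //.
Qed.

Lemma iintD k : forall f g, mble k f -> mble k g -> (forall s, 0 <= f s)%E -> (forall s, 0 <= g s)%E ->
  iint k (fun s => f s + g s)%E = (iint k f + iint k g)%E.
Proof.
elim: k => [|k IH] f g mf mg f0 g0 //=.
rewrite (eq_integral (fun x : measurableTypeR R => iint k (fun s => f ((x:R) :: s)) + iint k (fun s => g ((x:R) :: s))))%E; last first.
  by move=> x _; apply: IH => //; apply: mble_cons.
apply: ge0_integralD => //.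
- by move=> x _; apply: iint_ge0.
- exact: mble_sec.
- by move=> x _; apply: iint_ge0.
- exact: mble_sec.
Qed.

Lemma iintZ k (c : R) : 0 <= c -> forall f, mble k f -> (forall s, 0 <= f s)%E ->
  iint k (fun s => c%:E * f s)%E = (c%:E * iint k f)%E.
Proof.
move=> c0; elim: k => [|k IH] f mf f0 //=.
rewrite (eq_integral (fun x : measurableTypeR R => c%:E * iint k (fun s => f ((x:R) :: s))))%E; last first.
  by move=> x _; apply: IH => //; apply: mble_cons.
apply: ge0_integralZl => //.
- exact: mble_sec.
- by move=> x _; apply: iint_ge0.
Qed.

Lemma iint_le k : forall f g, mble k f -> mble k g -> (forall s, 0 <= f s)%E -> (forall s, f s <= g s)%E ->
  (iint k f <= iint k g)%E.
Proof.
elim: k => [|k IH] f g mf mg f0 fg //=.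
apply: ge0_le_integral => //.
- by move=> x _; apply: iint_ge0.
- exact: mble_sec.
- apply: mble_sec => // s; exact: le_trans (fg s).
- by move=> x _; apply: IH => //; apply: mble_cons.
Qed.

Lemma iint0 k : iint k (fun _ : seq R => 0%E) = 0%E.
Proof.
elim: k => [|k IH] //=.
rewrite (eq_integral (cst 0%E)); last by move=> x _; rewrite IH.
exact: integral0.
Qed.

Definition rowof k (z : Rk k) : 'rV[R]_k := vec_of k (seq_of z).
Definition mR k (h : 'rV[R]_k -> R) := measurable_fun [set: Rk k] (fun z => h (rowof z)).

Lemma mcoord k : forall i : nat, measurable_fun [set: Rk k] (fun z => nth 0 (seq_of z) i).
Proof.
elim: k => [|k IH] i.
  have -> : (fun z : Rk 0 => nth 0 (seq_of z) i) = fun _ => 0 by apply: funext => z; rewrite nth_nil.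
  exact: measurable_cst.
case: i => [|i].
  have -> : (fun z : Rk k.+1 => nth 0 (seq_of z) 0) = fst by [].
  exact: measurable_fst.
have -> : (fun z : Rk k.+1 => nth 0 (seq_of z) i.+1) = (fun z : Rk k => nth 0 (seq_of z) i) \o snd by [].
exact: measurableT_comp (IH i) measurable_snd.
Qed.

Lemma mR_coord k (i : 'I_k) : mR (fun x : 'rV[R]_k => x ord0 i).
Proof. by rewrite /mR /rowof /vec_of; under eq_fun do rewrite mxE; exact: mcoord. Qed.

Lemma mR_cst k (r : R) : mR (fun _ : 'rV[R]_k => r).
Proof. exact: measurable_cst. Qed.

Lemma mR_add k (f g : 'rV[R]_k -> R) : mR f -> mR g -> mR (fun x => f x + g x).
Proof. move=> mf mg; exact: (measurable_funD mf mg). Qed.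

Lemma mR_mul k (f g : 'rV[R]_k -> R) : mR f -> mR g -> mR (fun x => f x * g x).
Proof. move=> mf mg; exact: (measurable_funM mf mg). Qed.

Lemma mR_comp k (phi : R -> R) (f : 'rV[R]_k -> R) : measurable_fun [set: R] phi -> mR f -> mR (fun x => phi (f x)).
Proof. move=> mphi mf; exact: (measurableT_comp mphi mf). Qed.

Lemma mR_sum k (I : finType) (P : pred I) (F : I -> 'rV[R]_k -> R) :
  (forall i, mR (F i)) -> mR (fun x => \sum_(i | P i) F i x).
Proof.
move=> mF; rewrite /mR; under eq_fun do rewrite big_mkcond.
apply: measurable_sum => i; case: (P i). exact: mF. exact: measurable_cst.
Qed.

Lemma mR_prod k (I : finType) (F : I -> 'rV[R]_k -> R) :
  (forall i, mR (F i)) -> mR (fun x => \prod_i F i x).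
Proof. move=> mF; rewrite /mR; apply: measurable_prod => i _; exact: mF. Qed.

Lemma mR_exp k (f : 'rV[R]_k -> R) n : mR f -> mR (fun x => f x ^+ n).
Proof. move=> mf; exact: measurable_funX. Qed.

Lemma mR_if k (b : 'rV[R]_k -> bool) (f g : 'rV[R]_k -> R) :
  measurable_fun [set: Rk k] (fun z => b (rowof z)) -> mR f -> mR g ->
  mR (fun x => if b x then f x else g x).
Proof. move=> mb mf mg; exact: measurable_fun_ifT. Qed.

Lemma mR_le k (f g : 'rV[R]_k -> R) : mR f -> mR g ->
  measurable_fun [set: Rk k] (fun z => f (rowof z) <= g (rowof z)).
Proof. move=> mf mg; exact: measurable_fun_ler. Qed.

Lemma mR_lt k (f g : 'rV[R]_k -> R) : mR f -> mR g ->
  measurable_fun [set: Rk k] (fun z => f (rowof z) < g (rowof z)).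
Proof. move=> mf mg; exact: measurable_fun_ltr. Qed.

Lemma meas_sqrt : measurable_fun [set: R] (@Num.sqrt R).
Proof. apply: continuous_measurable_fun; exact: sqrt_continuous. Qed.

Definition pinvR (x : R) := if 0 < x then x^-1 else 0.

Lemma meas_pinv : measurable_fun [set: R] pinvR.
Proof.
apply: measurable_fun_if => //.
  apply: measurable_fun_ltr => //; exact: measurable_cst.
rewrite setTI.
have -> : (((fun x : R => 0 < x) @^-1` [set true]) = [set x : R | x > 0])%classic.
  by apply/seteqP; split => x /=.
apply: open_continuous_measurable_fun; first exact: open_gt.
move=> x; rewrite inE /= => x0; apply: inv_continuous; exact: lt0r_neq0.
Qed.

Lemma mR_enorm k : mR (@enorm R k).
Proof.
rewrite /enorm; apply: mR_comp; first exact: meas_sqrt.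
apply: mR_sum => i; apply: mR_exp; exact: mR_coord.
Qed.
End Meas.

Section PartA.
Variable R : realType.

Lemma posdef_unit m (M : 'M[R]_m) : posdef M -> M \in unitmx.
Proof.
move=> pd; rewrite unitmxE unitfE; apply/negP => /det0P [u u0 uM].
by have := pd u u0; rewrite uM mul0mx mxE ltxx.
Qed.

Lemma partA (q N : nat) (C : seq 'rV[R]_q.+1) (v : 'rV[R]_q.+1 -> R)
          (y : 'I_N.+1 -> 'rV[R]_q.+1 -> R) :
     (forall xi, xi \in C -> 0 < v xi) ->
     posdef (gram C v y) ->
     (forall l : 'I_N.+1,
        \sum_(xi <- C) wLSQ C v y xi * y l xi = (l == ord0)%:R) /\
     (forall w : 'rV[R]_q.+1 -> R,
        (forall l : 'I_N.+1, \sum_(xi <- C) w xi * y l xi = (l == ord0)%:R) ->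
        \sum_(xi <- C) (wLSQ C v y xi) ^+ 2 / v xi
          <= \sum_(xi <- C) (w xi) ^+ 2 / v xi).
Proof.
move=> v0 pd.
have U := posdef_unit pd.
set G := gram C v y.
set a := fun xi => \sum_k (invmx G) ord0 k * y k xi.
have wE xi : wLSQ C v y xi = v xi * a xi by [].
have H1 : forall l : 'I_N.+1, \sum_(xi <- C) wLSQ C v y xi * y l xi = (l == ord0)%:R.
  move=> l.
  have -> : \sum_(xi <- C) wLSQ C v y xi * y l xi = (invmx G *m G) ord0 l.
    rewrite mxE.
    under eq_bigr do rewrite wE /a mulr_sumr big_distrl /=.
    rewrite exchange_big /=; apply: eq_bigr => k _.
    rewrite /G /gram mxE big_distrr /=; apply: eq_bigr => xi _.
    by rewrite !mulrA (mulrC (v xi)).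

  by rewrite mulVmx // mxE eq_sym.
split => // w Hw.
have Sa : forall u : 'rV[R]_q.+1 -> R, (forall l : 'I_N.+1, \sum_(xi <- C) u xi * y l xi = (l == ord0)%:R) ->
   \sum_(xi <- C) a xi * u xi = (invmx G) ord0 ord0.
  move=> u Hu.
  under eq_bigr do rewrite /a big_distrl /=.
  rewrite exchange_big /= (bigD1 ord0) //= [X in _ + X]big1 ?addr0.
    under eq_bigr do rewrite -mulrA (mulrC (y _ _)).
    by rewrite -mulr_sumr Hu eqxx mulr1.
  move=> k /negPf k0.
  under eq_bigr do rewrite -mulrA (mulrC (y _ _)).
  by rewrite -mulr_sumr Hu k0 mulr0.
set d := fun xi => w xi - wLSQ C v y xi.
have E : \sum_(xi <- C) (w xi) ^+ 2 / v xi =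
   \sum_(xi <- C) (wLSQ C v y xi) ^+ 2 / v xi + 2 * \sum_(xi <- C) (a xi * d xi)
   + \sum_(xi <- C) (d xi) ^+ 2 / v xi.
  rewrite mulr_sumr -!big_split /= big_seq_cond [RHS]big_seq_cond.
  apply: eq_bigr => xi /andP[xC _].
  have vn0 : v xi != 0 by rewrite gt_eqF // v0.
  rewrite /d wE; field => //.
have ad0 : \sum_(xi <- C) (a xi * d xi) = 0.
  rewrite /d; under eq_bigr do rewrite mulrBr.
  by rewrite big_split /= sumrN (Sa _ Hw) (Sa _ H1) subrr.
rewrite E ad0 mulr0 addr0 lerDl.
rewrite big_seq_cond; apply: sumr_ge0 => xi /andP[xC _].
by apply: divr_ge0; [exact: sqr_ge0 | exact: ltW (v0 _ xC)].
Qed.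
End PartA.

Section HBfin.
Variable R : realType.
Variable m : nat.
Variable u : 'I_m -> R.
Hypothesis u0 : forall i, 0 <= u i.

Definition pn (f : 'rV[R]_m) := \sum_i u i * `|f ord0 i|.

Lemma pnD f g : pn (f + g) <= pn f + pn g.
Proof.
rewrite /pn -big_split /=; apply: ler_sum => i _; rewrite mxE -mulrDr ler_wpM2l //.
exact: ler_normD.
Qed.

Lemma pnZ t f : pn (t *: f) = `|t| * pn f.
Proof. by rewrite /pn mulr_sumr; apply: eq_bigr => i _; rewrite mxE normrM mulrCA. Qed.

Lemma pnN f : pn (- f) = pn f.
Proof. by rewrite -scaleN1r pnZ normrN normr1 mul1r. Qed.

Definition subsp (V : 'rV[R]_m -> Prop) :=
  [/\ V 0, (forall f g, V f -> V g -> V (f + g)) & (forall t f, V f -> V (t *: f))].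
Definition goodL (V : 'rV[R]_m -> Prop) (L : 'rV[R]_m -> R) :=
  [/\ subsp V, (forall f g, V f -> V g -> L (f + g) = L f + L g),
      (forall t f, V f -> L (t *: f) = t * L f) & (forall f, V f -> L f <= pn f)].

Lemma ext1 V L g : goodL V L -> exists V' L', [/\ goodL V' L', (forall f, V f -> V' f /\ L' f = L f) & V' g].
Proof.
move=> [[V0 VD VZ] LD LZ Lp].
have LN f : V f -> L (- f) = - L f by move=> Vf; rewrite -scaleN1r LZ // mulN1r.
have VN f : V f -> V (- f) by move=> Vf; rewrite -scaleN1r; exact: VZ.
have VB f h : V f -> V h -> V (f - h) by move=> ? ?; apply: VD => //; exact: VN.
have LB f h : V f -> V h -> L (f - h) = L f - L h by move=> ? ?; rewrite LD ?LN //; exact: VN.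
have L0 : L 0 = 0 by have := LZ 0 0 V0; rewrite scale0r mul0r.
have [Vg|nVg] := pselect (V g).
  by exists V, L; split => //; split.
pose S := [set x : R | exists h, V h /\ x = L h - pn (h - g)]%classic.
have key h1 h2 : V h1 -> V h2 -> L h1 - pn (h1 - g) <= pn (h2 + g) - L h2.
  move=> V1 V2.
  have : L (h1 + h2) <= pn ((h1 - g) + (h2 + g)).
    have -> : (h1 - g) + (h2 + g) = h1 + h2 by rewrite addrACA addNr addr0.
    exact: Lp (VD _ _ V1 V2).
  rewrite LD // => H; have := pnD (h1 - g) (h2 + g); lra.
have hS : has_sup S.
  split; first by exists (L 0 - pn (0 - g)), 0.
  exists (pn (0 + g) - L 0) => x [h [Vh ->]]; exact: key.
pose a := sup S.
have a_lo h : V h -> L h - pn (h - g) <= a.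
  by move=> Vh; apply: sup_upper_bound => //; exists h.
have a_hi h : V h -> a <= pn (h + g) - L h.
  move=> Vh; apply: ge_sup; first by exists (L 0 - pn (0 - g)), 0.
  by move=> x [h' [Vh' ->]]; exact: key.
have uniq h1 t1 h2 t2 : V h1 -> V h2 -> h1 + t1 *: g = h2 + t2 *: g -> t1 = t2 /\ h1 = h2.
  move=> V1 V2 E.
  have [t12|t12] := eqVneq t1 t2.
    by subst t2; split => //; move/addIr: E.
  exfalso; apply: nVg.
  have -> : g = (t1 - t2)^-1 *: (h2 - h1).
    apply: (scalerI (a := t1 - t2)); first by rewrite subr_eq0.
    rewrite scalerA mulfV ?subr_eq0 // scale1r scalerBl.
    have H := congr1 (fun x => x - (h1 + t2 *: g)) E.
    by rewrite /= [h1 + t1 *: g]addrC addrKA [h1 + t2 *: g]addrC addrKA in H.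
  by apply: VZ; exact: VB.
pose V' := fun f => exists p : 'rV[R]_m * R, V p.1 /\ f = p.1 + p.2 *: g.
pose L' := fun f => if pselect (V' f) is left H then
      let p := projT1 (cid H) in L p.1 + p.2 * a else 0.
have L'E h t : V h -> L' (h + t *: g) = L h + t * a.
  move=> Vh; rewrite /L'; case: pselect => [H|H]; last first.
    by exfalso; apply: H; exists (h, t).
  case: (cid H) => [[h' t']] /= [Vh' E].
  by have [-> ->] := uniq _ _ _ _ Vh Vh' E.
exists V', L'; split.
- split.
  + split.
    * by exists (0, 0); rewrite /= scale0r addr0.
    * move=> f1 f2 [[h1 t1] /= [V1 ->]] [[h2 t2] /= [V2 ->]].
      exists (h1 + h2, t1 + t2); split; first exact: VD.
      by rewrite /= scalerDl addrACA.
    * move=> s f [[h t] /= [Vh ->]]; exists (s *: h, s * t); split; first exact: VZ.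
      by rewrite /= scalerDr scalerA.
  + move=> f1 f2 [[h1 t1] /= [V1 ->]] [[h2 t2] /= [V2 ->]].
    rewrite addrACA -scalerDl !L'E ?LD //; last exact: VD.
    ring.
  + move=> s f [[h t] /= [Vh ->]].
    rewrite scalerDr scalerA !L'E ?LZ //; last exact: VZ.
    ring.
  + move=> f [[h t] /= [Vh ->]]; rewrite L'E //.
    have [t0|t0|->] := ltgtP t 0; last by rewrite mul0r addr0 scale0r addr0; exact: Lp.
    * pose s := - t; have s0 : 0 < s by rewrite /s oppr_gt0.
      have := a_lo (s^-1 *: h) (VZ _ _ Vh).
      rewrite LZ // -[X in pn (_ - X)](scale1r g) -(mulVf (lt0r_neq0 s0)) -scalerA -scalerBr pnZ.
      rewrite gtr0_norm ?invr_gt0 // => H.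
      have H2 : s^-1 * (L h - pn (h - s *: g)) <= a by rewrite mulrBr.
      rewrite -(ler_pM2l s0) mulrA mulfV ?lt0r_neq0 // mul1r in H2.
      have -> : h + t *: g = h - s *: g by rewrite /s scaleNr opprK.
      rewrite /s in H2; lra.
    * have := a_hi (t^-1 *: h) (VZ _ _ Vh).
      rewrite LZ // -[X in pn (_ + X)](scale1r g) -(mulVf (lt0r_neq0 t0)) -scalerA -scalerDr pnZ.
      rewrite gtr0_norm ?invr_gt0 // => H.
      have H2 : a <= t^-1 * (pn (h + t *: g) - L h) by rewrite mulrBr.
      rewrite -(ler_pM2l t0) mulrA mulfV ?lt0r_neq0 // mul1r in H2.
      lra.
- move=> f Vf; split; first by exists (f, 0); rewrite /= scale0r addr0.
  by have := L'E f 0 Vf; rewrite scale0r addr0 mul0r addr0.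
- by exists (0, 1); rewrite /= scale1r add0r.
Qed.

Lemma ext_all V L : goodL V L -> forall j, (j <= m)%N ->
  exists V' L', [/\ goodL V' L', (forall f, V f -> V' f /\ L' f = L f) &
     (forall i : 'I_m, (i < j)%N -> V' (delta_mx 0 i))].
Proof.
move=> GL; elim=> [|j IH] jm.
  by exists V, L; split => // i.
have [V1 [L1 [G1 E1 D1]]] := IH (ltnW jm).
have [V2 [L2 [G2 E2 D2]]] := ext1 (delta_mx 0 (Ordinal jm)) G1.
exists V2, L2; split.
- exact: G2.
- move=> f Vf; have [V1f L1f] := E1 f Vf; have [V2f L2f] := E2 f V1f.
  by split => //; rewrite L2f.
- move=> i; rewrite ltnS leq_eqVlt => /orP[/eqP ij|ij].
    by have -> : i = Ordinal jm by apply: val_inj.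
  by have [] := E2 _ (D1 i ij).
Qed.

Lemma HB V L : goodL V L -> exists W : 'I_m -> R,
  (forall i, `|W i| <= u i) /\ (forall f, V f -> L f = \sum_i W i * f ord0 i).
Proof.
move=> GL; have [V' [L' [[[V0 VD VZ] LD LZ Lp] E D]]] := ext_all GL (leqnn m).
have De i : V' (delta_mx 0 i) by apply: D; exact: ltn_ord.
exists (fun i => L' (delta_mx 0 i)); split.
  move=> i; rewrite ler_norml.
  have pe : pn (delta_mx 0 i) = u i.
    rewrite /pn (bigD1 i) //= mxE !eqxx /= normr1 mulr1 big1 ?addr0 //.
    by move=> j /negPf ji; rewrite mxE eq_sym ji andbF normr0 mulr0.
  apply/andP; split; last by rewrite -pe; exact: Lp.
  have := Lp _ (VZ (-1) _ (De i)); rewrite LZ // scaleN1r pnN pe; lra.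
move=> f Vf; have [_ <-] := E f Vf.
have gen : forall s : seq 'I_m, V' (\sum_(i <- s) f ord0 i *: delta_mx 0 i) /\
   L' (\sum_(i <- s) f ord0 i *: delta_mx 0 i) = \sum_(i <- s) L' (delta_mx 0 i) * f ord0 i.
  elim=> [|i s [IHV IHL]]; first by rewrite !big_nil; split => //; have := LZ 0 0 V0; rewrite scale0r mul0r.
  rewrite !big_cons; split; first by apply: VD => //; exact: VZ.
  rewrite LD ?LZ ?IHL //; last exact: VZ.
  by rewrite mulrC.
by have [_ ] := gen (index_enum _); rewrite -[f in L' f]row_sum_delta.
Qed.
End HBfin.

Section Sph.
Variable R : realType.
Variable q : nat.
Local Notation k := q.+1.

Definition Ih (h : 'rV[R]_k -> R) := volint (fun x => (h x)%:E).
Definition pos (h : 'rV[R]_k -> R) x := Num.max (h x) 0.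
Definition neg (h : 'rV[R]_k -> R) x := Num.max (- h x) 0.
Definition Cone (f : 'rV[R]_k -> R) (x : 'rV[R]_k) :=
  if (0 < enorm x) && (enorm x <= 1) then f ((enorm x)^-1 *: x) else 0.
Definition ballr (x : 'rV[R]_k) : R := if enorm x <= 1 then 1 else 0.
Definition B := volint (@ball_ind R q).
Definition K := (fine B)^-1.

Lemma maxr0E (t : R) : Num.max t 0 = if 0 <= t then t else 0.
Proof. rewrite maxEle; case: ifP; case: ifP => // *; lra. Qed.

Lemma fineMr (x : \bar R) (y : R) : fine (x * y%:E)%E = fine x * y.
Proof.
case: x => [r| |] //=.
  by rewrite mulyr; case: sgrP => _; rewrite ?mul0e ?mul1e ?mulN1e //= mul0r.
by rewrite mulr_infty; case: sgrP => _; rewrite ?mul0e ?mul1e ?mulN1e //= mul0r.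
Qed.

Lemma enorm_scale (a : R) (x : 'rV[R]_k) : enorm (a *: x) = `|a| * enorm x.
Proof.
rewrite /enorm.
have -> : \sum_i (a *: x) ord0 i ^+ 2 = a ^+ 2 * \sum_i x ord0 i ^+ 2.
  by rewrite mulr_sumr; apply: eq_bigr => i _; rewrite mxE exprMn.
by rewrite sqrtrM ?sqr_ge0 // sqrtr_sqr.
Qed.

Lemma on_sphere_scale (x : 'rV[R]_k) : 0 < enorm x -> on_sphere ((enorm x)^-1 *: x).
Proof.
move=> e0; rewrite /on_sphere enorm_scale ger0_norm ?invr_ge0 ?ltW //.
by rewrite mulVf // gt_eqF.
Qed.

Lemma Cone_ext (f g : 'rV[R]_k -> R) : (forall x, on_sphere x -> f x = g x) -> Cone f = Cone g.
Proof.
move=> fg; apply: funext => x; rewrite /Cone; case: ifP => // /andP[e0 _].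
by rewrite fg //; apply: on_sphere_scale.
Qed.

Lemma sphE (f : 'rV[R]_k -> R) :
  sph_int f = K * (fine (Ih (pos (Cone f))) - fine (Ih (neg (Cone f)))).
Proof.
rewrite /sph_int /sph_int_nn !fineMr -/B -/K mulrBr !(mulrC K).
congr (fine _ * _ - fine _ * _); rewrite /Ih; congr volint; apply: funext => x;
  rewrite /cone_ext /Cone /pos /neg; case: ifP => // _; by rewrite ?oppr0 maxxx.
Qed.

Lemma mbleI (h : 'rV[R]_k -> R) : mR h -> mble k (fun s => (h (vec_of k s))%:E).
Proof. by move=> mh; rewrite /mble; apply/measurable_EFinP. Qed.

Lemma Ih_ge0 h : (forall x, 0 <= h x) -> (0 <= Ih h)%E.
Proof. by move=> h0; apply: iint_ge0 => s; rewrite lee_fin. Qed.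

Lemma IhD (f g : 'rV[R]_k -> R) : mR f -> mR g -> (forall x, 0 <= f x) -> (forall x, 0 <= g x) ->
  Ih (fun x => f x + g x) = (Ih f + Ih g)%E.
Proof.
move=> mf mg f0 g0; rewrite /Ih /volint.
under eq_fun do rewrite EFinD.
apply: iintD; try exact: mbleI.
- by move=> s; rewrite lee_fin.
- by move=> s; rewrite lee_fin.
Qed.

Lemma IhZ (a : R) (f : 'rV[R]_k -> R) : 0 <= a -> mR f -> (forall x, 0 <= f x) ->
  Ih (fun x => a * f x) = (a%:E * Ih f)%E.
Proof.
move=> a0 mf f0; rewrite /Ih /volint.
under eq_fun do rewrite EFinM.
apply: iintZ => //; first exact: mbleI.
by move=> s; rewrite lee_fin.
Qed.

Lemma Ih_le (f g : 'rV[R]_k -> R) : mR f -> mR g -> (forall x, 0 <= f x) -> (forall x, f x <= g x) ->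
  (Ih f <= Ih g)%E.
Proof.
move=> mf mg f0 fg; apply: iint_le; try exact: mbleI.
- by move=> s; rewrite lee_fin.
- by move=> s; rewrite lee_fin.
Qed.

Lemma Ih0 : Ih (fun _ => 0) = 0%E.
Proof. exact: iint0. Qed.

Lemma BE : B = Ih ballr.
Proof. by rewrite /B /Ih; congr volint; apply: funext => x; rewrite /ball_ind /ballr; case: ifP. Qed.

Lemma B_ge0 : (0 <= B)%E.
Proof. rewrite BE; apply: Ih_ge0 => x; rewrite /ballr; case: ifP => _ //. Qed.

Lemma meas_max0 : measurable_fun [set: R] (fun t : R => Num.max t 0).
Proof. exact: (measurable_maxr (@measurable_id _ _ setT) (measurable_cst _)). Qed.

Lemma mR_pos h : mR h -> mR (pos h).
Proof. move=> mh; exact: (mR_comp meas_max0 mh). Qed.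

Lemma mR_neg h : mR h -> mR (neg h).
Proof.
move=> mh; apply: (mR_comp meas_max0); apply: (mR_comp (@oppr_measurable R setT)) => //.
Qed.

Lemma mR_ballr : mR ballr.
Proof.
apply: (mR_if (b := fun x => enorm x <= 1) (f := fun _ => 1) (g := fun _ => 0)).
- exact: (mR_le (f := @enorm R k) (g := fun _ => 1) (@mR_enorm R k) (@mR_cst R k 1)).
- exact: mR_cst.
- exact: mR_cst.
Qed.

Definition Good (h : 'rV[R]_k -> R) := mR h /\ exists M, 0 <= M /\ forall x, `|h x| <= M * ballr x.

Lemma Ih_fin (g : 'rV[R]_k -> R) M : mR g -> 0 <= M -> (forall x, 0 <= g x) -> (forall x, g x <= M * ballr x) ->
  (B < +oo)%E -> Ih g \is a fin_num.
Proof.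
move=> mg M0 g0 gM Bf.
rewrite ge0_fin_numE; last exact: Ih_ge0.
apply: (le_lt_trans (Ih_le mg _ g0 gM)).
  by apply: mR_mul; [exact: mR_cst | exact: mR_ballr].
rewrite IhZ //; last by move=> x; rewrite /ballr; case: ifP.
  rewrite -BE -ge0_fin_numE; last by apply: mule_ge0 => //; exact: B_ge0.
  by rewrite fin_numM // ge0_fin_numE // B_ge0.
exact: mR_ballr.
Qed.

Definition Dv (h : 'rV[R]_k -> R) := fine (Ih (pos h)) - fine (Ih (neg h)).

Lemma posnegE (t : R) : Num.max t 0 - Num.max (- t) 0 = t.
Proof. rewrite !maxr0E; case: ifP; case: ifP => *; lra. Qed.

Lemma pos_ge0 h x : 0 <= pos h x.
Proof. by rewrite /pos le_max lexx orbT. Qed.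
Lemma neg_ge0 h x : 0 <= neg h x.
Proof. by rewrite /neg le_max lexx orbT. Qed.
Lemma pos_le h x : pos h x <= `|h x|.
Proof. rewrite /pos maxr0E; case: ifP => _; [exact: ler_norm | exact: normr_ge0]. Qed.
Lemma neg_le h x : neg h x <= `|h x|.
Proof. rewrite /neg maxr0E -normrN; case: ifP => _; [exact: ler_norm | exact: normr_ge0]. Qed.

Lemma Good_fin_pos h : Good h -> (B < +oo)%E -> Ih (pos h) \is a fin_num.
Proof.
move=> [mh [M [M0 hM]]] Bf; apply: (Ih_fin (M := M)) => //.
- exact: mR_pos.
- exact: pos_ge0.
- by move=> x; apply: le_trans (pos_le _ _) (hM x).
Qed.
Lemma Good_fin_neg h : Good h -> (B < +oo)%E -> Ih (neg h) \is a fin_num.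
Proof.
move=> [mh [M [M0 hM]]] Bf; apply: (Ih_fin (M := M)) => //.
- exact: mR_neg.
- exact: neg_ge0.
- by move=> x; apply: le_trans (neg_le _ _) (hM x).
Qed.

Lemma Good_add f g : Good f -> Good g -> Good (fun x => f x + g x).
Proof.
move=> [mf [M [M0 fM]]] [mg [N [N0 gN]]]; split; first exact: mR_add.
exists (M + N); split; first exact: addr_ge0.
move=> x; apply: le_trans (ler_normD _ _) _; rewrite mulrDl; exact: lerD.
Qed.

Lemma DvD f g : (B < +oo)%E -> Good f -> Good g -> Dv (fun x => f x + g x) = Dv f + Dv g.
Proof.
move=> Bf Gf Gg.
have Gfg := Good_add Gf Gg.
have [mf _] := Gf; have [mg _] := Gg; have [mfg _] := Gfg.
have E : (Ih (pos (fun x => (f x + g x)%R)) + Ih (neg f) + Ih (neg g) =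
          Ih (neg (fun x => (f x + g x)%R)) + Ih (pos f) + Ih (pos g))%E.
  rewrite -!IhD //; try exact: pos_ge0; try exact: neg_ge0; try exact: mR_pos; try exact: mR_neg;
   try (by move=> x; apply: addr_ge0; [exact: pos_ge0|exact: neg_ge0]);
   try (by move=> x; apply: addr_ge0; [exact: neg_ge0|exact: pos_ge0]);
   try (by apply: mR_add; [exact: mR_pos|exact: mR_neg]);
   try (by apply: mR_add; [exact: mR_neg|exact: mR_pos]).
  congr Ih; apply: funext => x.
  have := posnegE (f x + g x)%R; have := posnegE (f x); have := posnegE (g x).
  rewrite /pos /neg; lra.
move: E.
rewrite -(fineK (Good_fin_pos Gfg Bf)) -(fineK (Good_fin_neg Gfg Bf)).
rewrite -(fineK (Good_fin_pos Gf Bf)) -(fineK (Good_fin_neg Gf Bf)).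
rewrite -(fineK (Good_fin_pos Gg Bf)) -(fineK (Good_fin_neg Gg Bf)).
rewrite -!EFinD; case => E; rewrite /Dv; lra.
Qed.

Lemma fineMl (a : R) (x : \bar R) : fine (a%:E * x)%E = a * fine x.
Proof. by rewrite muleC fineMr mulrC. Qed.

Lemma maxr0_pM (a t : R) : 0 <= a -> Num.max (a * t) 0 = a * Num.max t 0.
Proof.
move=> a0; rewrite !maxr0E; have [t0|t0] := leP 0 t; have [at0|at0] := leP 0 (a * t); nra.
Qed.

Lemma DvZ (a : R) h : mR h -> Dv (fun x => a * h x) = a * Dv h.
Proof.
move=> mh; rewrite /Dv.
have [a0|a0] := leP 0 a.
  have -> : pos (fun x => a * h x) = fun x => a * pos h x.
    by apply: funext => x; rewrite /pos maxr0_pM.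
  have -> : neg (fun x => a * h x) = fun x => a * neg h x.
    by apply: funext => x; rewrite /neg -maxr0_pM // mulrN.
  rewrite !IhZ //; try solve [exact: pos_ge0 | exact: neg_ge0 | exact: mR_pos | exact: mR_neg].
  by rewrite !fineMl mulrBr.
have na0 : 0 <= - a by lra.
have -> : pos (fun x => a * h x) = fun x => - a * neg h x.
  by apply: funext => x; rewrite /pos /neg -maxr0_pM // mulNr mulrN opprK.
have -> : neg (fun x => a * h x) = fun x => - a * pos h x.
  by apply: funext => x; rewrite /pos /neg -maxr0_pM // mulNr.
rewrite !IhZ //; try solve [exact: pos_ge0 | exact: neg_ge0 | exact: mR_pos | exact: mR_neg].
rewrite !fineMl; ring.
Qed.

Variable n : nat.
Local Notation coef := ({ffun 'I_k -> 'I_n.+1} -> R).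

Definition Fc (c : coef) := Cone (polyfun c).

Lemma Fc_meas (c : coef) : mR (Fc c).
Proof.
have -> : Fc c = fun x => if (0 < enorm x) && (enorm x <= 1) then
     \sum_(a : {ffun 'I_k -> 'I_n.+1} | (\sum_i nat_of_ord (a i) <= n)%N)
        (c a * \prod_(i < k) ((pinvR (enorm x) * x ord0 i) ^+ a i)) else 0.
  apply: funext => x; rewrite /Fc /Cone; case: ifP => // /andP[e0 _].
  rewrite /polyfun /monom; apply: eq_bigr => a _; congr (_ * _); apply: eq_bigr => i _.
  by rewrite mxE /pinvR e0.
apply: (mR_if (b := fun x => (0 < enorm x) && (enorm x <= 1))).
- apply: measurable_and.
  + exact: (mR_lt (f := fun _ => 0) (g := @enorm R k) (@mR_cst R k 0) (@mR_enorm R k)).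
  + exact: (mR_le (f := @enorm R k) (g := fun _ => 1) (@mR_enorm R k) (@mR_cst R k 1)).
- apply: mR_sum => a; apply: mR_mul; first exact: mR_cst.
  apply: mR_prod => i; apply: mR_exp.
  apply: (mR_mul (f := fun x => pinvR (enorm x)) (g := fun x => x ord0 i)); last exact: mR_coord.
  apply: (mR_comp (f := @enorm R k) (phi := @pinvR R)). exact: meas_pinv. exact: mR_enorm.
- exact: mR_cst.
Qed.

Lemma coord_le1 (y : 'rV[R]_k) i : on_sphere y -> `|y ord0 i| <= 1.
Proof.
rewrite /on_sphere /enorm => h; rewrite -h -sqrtr_sqr ler_sqrt; last first.
  by apply: sumr_ge0 => j _; exact: sqr_ge0.
rewrite (bigD1 i) //= lerDl; apply: sumr_ge0 => j _; exact: sqr_ge0.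
Qed.

Lemma polyfun_bound (c : coef) y : on_sphere y -> `|polyfun c y| <= \sum_a `|c a|.
Proof.
move=> hy; rewrite /polyfun; apply: le_trans (ler_norm_sum _ _ _) _.
have H2 : \sum_(a : {ffun 'I_k -> 'I_n.+1} | (\sum_i nat_of_ord (a i) <= n)%N) `|c a| <= \sum_a `|c a|.
  rewrite [X in _ <= X](bigID (fun a : {ffun 'I_k -> 'I_n.+1} => (\sum_i nat_of_ord (a i) <= n)%N)) /= lerDl.
  by apply: sumr_ge0 => a _.
apply: le_trans H2.
apply: ler_sum => a _; rewrite normrM -[X in _ <= X]mulr1 ler_wpM2l //.
rewrite /monom normr_prod; apply: prodr_ile1 => i _.
by rewrite normr_ge0 /= normrX exprn_ile1 ?normr_ge0 ?coord_le1.
Qed.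

Lemma Fc_Good (c : coef) : Good (Fc c).
Proof.
split; first exact: Fc_meas.
exists (\sum_a `|c a|); split; first by apply: sumr_ge0 => a _.
move=> x; rewrite /Fc /Cone /ballr; case: ifP => [/andP[e0 e1]|_].
  by rewrite e1 mulr1; apply: polyfun_bound; exact: on_sphere_scale.
by rewrite normr0; case: ifP => _; rewrite ?mulr1 ?mulr0 // sumr_ge0.
Qed.

Lemma polyfunD (c1 c2 : coef) y : polyfun (fun a => c1 a + c2 a) y = polyfun c1 y + polyfun c2 y.
Proof. by rewrite /polyfun -big_split; apply: eq_bigr => a _; rewrite mulrDl. Qed.

Lemma polyfunZ (t : R) (c : coef) y : polyfun (fun a => t * c a) y = t * polyfun c y.
Proof. by rewrite /polyfun mulr_sumr; apply: eq_bigr => a _; rewrite mulrA. Qed.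

Lemma FcD (c1 c2 : coef) : Fc (fun a => c1 a + c2 a) = fun x => Fc c1 x + Fc c2 x.
Proof. apply: funext => x; rewrite /Fc /Cone; case: ifP => _; by rewrite ?polyfunD ?addr0. Qed.

Lemma FcZ (t : R) (c : coef) : Fc (fun a => t * c a) = fun x => t * Fc c x.
Proof. apply: funext => x; rewrite /Fc /Cone; case: ifP => _; by rewrite ?polyfunZ ?mulr0. Qed.

Definition Lam (c : coef) := sph_int (polyfun c).

Lemma LamE c : Lam c = K * Dv (Fc c).
Proof. by rewrite /Lam sphE. Qed.

Lemma K_inf : ~~ (B < +oo)%E -> K = 0.
Proof. by rewrite ltey negbK => /eqP Bi; rewrite /K Bi /= invr0. Qed.

Lemma LamD c1 c2 : Lam (fun a => c1 a + c2 a) = Lam c1 + Lam c2.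
Proof.
rewrite !LamE; have [Bf|Bi] := boolP (B < +oo)%E; last by rewrite K_inf // !mul0r addr0.
by rewrite FcD DvD ?mulrDr //; exact: Fc_Good.
Qed.

Lemma LamZ t c : Lam (fun a => t * c a) = t * Lam c.
Proof.
rewrite !LamE FcZ (DvZ _ (Fc_meas c)).
exact: mulrCA.
Qed.

Lemma K_ge0 : 0 <= K.
Proof. by rewrite /K invr_ge0 fine_ge0 // B_ge0. Qed.

Lemma absE (t : R) : `|t| = Num.max t 0 + Num.max (- t) 0.
Proof.
rewrite !maxr0E; have [t0|t0] := leP 0 t; have [t1|t1] := leP 0 (- t).
- rewrite ger0_norm //; lra.
- rewrite ger0_norm //; lra.
- rewrite ltr0_norm //; lra.
- lra.
Qed.

Lemma Lam_bound c : `|Lam c| <= Lpnorm 1%:E (polyfun c).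
Proof.
set F := Fc c.
set Q := fun x => `|polyfun c x| `^ 1.
have CQ : Cone Q = fun x => `|F x|.
  apply: funext => x; rewrite /Cone /F /Fc /Cone /Q; case: ifP => _.
    by rewrite powRr1.
  by rewrite normr0.
have sQ : sph_int Q = K * fine (Ih (fun x => `|F x|)).
  rewrite sphE CQ.
  have -> : pos (fun x => `|F x|) = fun x => `|F x|.
    by apply: funext => x; rewrite /pos maxr0E normr_ge0.
  have -> : neg (fun x => `|F x|) = fun _ => 0.
    apply: funext => x; rewrite /neg maxr0E; case: ifP => // h.
    have := normr_ge0 (F x); lra.
  by rewrite Ih0 /= subr0.
have sQ0 : 0 <= sph_int Q.
  rewrite sQ; apply: mulr_ge0; first exact: K_ge0.
  by apply: fine_ge0; apply: Ih_ge0 => x.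
have -> : Lpnorm 1%:E (polyfun c) = sph_int Q by rewrite /Lpnorm invr1 powRr1.
rewrite sQ LamE.
have [Bf|Bi] := boolP (B < +oo)%E; last by rewrite K_inf // !mul0r normr0.
have [mF _] := Fc_Good c.
have -> : (fun x => `|F x|) = fun x => pos F x + neg F x.
  by apply: funext => x; rewrite absE.
rewrite IhD; try solve [exact: pos_ge0 | exact: neg_ge0 | exact: mR_pos | exact: mR_neg].
rewrite fineD; try solve [exact: Good_fin_pos (Fc_Good c) Bf | exact: Good_fin_neg (Fc_Good c) Bf].
rewrite normrM ger0_norm ?K_ge0 // ler_wpM2l ?K_ge0 // /Dv.
apply: le_trans (ler_normB _ _) _.
rewrite !ger0_norm //; apply: fine_ge0; apply: Ih_ge0; solve [exact: pos_ge0 | exact: neg_ge0].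
Qed.
End Sph.

Section PartB.
Variable R : realType.

Lemma partB (q n : nat) (C : seq 'rV[R]_q.+1) (v : 'rV[R]_q.+1 -> R) (c1 c2 : R) :
     uniq C -> (forall xi, xi \in C -> on_sphere xi) ->
     (forall xi, xi \in C -> 0 < v xi) ->
     0 < c1 ->
     (forall (p : \bar R) (P : 'rV[R]_q.+1 -> R), (1 <= p)%E -> in_Pi n P ->
        c1 * Lpnorm p P <= dnorm C v p P /\ dnorm C v p P <= c2 * Lpnorm p P) ->
     exists W : 'rV[R]_q.+1 -> R,
       (forall xi, xi \in C -> `|W xi| <= c1^-1 * v xi) /\
       (forall P, in_Pi n P -> \sum_(xi <- C) W xi * P xi = sph_int P).
Proof.
move=> uC sC vC c10 hyp.
pose m := size C.
have im xi : xi \in C -> (index xi C < m)%N by rewrite index_mem.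
pose u := fun i : 'I_m => c1^-1 * v (nth 0 C i).
have u0 i : 0 <= u i.
  by rewrite /u mulr_ge0 ?invr_ge0 ?ltW // vC // mem_nth.
pose E := fun (c : {ffun 'I_q.+1 -> 'I_n.+1} -> R) => \row_(i < m) polyfun c (nth 0 C i).
have KB (c : {ffun 'I_q.+1 -> 'I_n.+1} -> R) : `|Lam c| <= c1^-1 * \sum_(xi <- C) v xi * `|polyfun c xi|.
  have [h1 _] := hyp 1%:E (polyfun c) (lexx _) (ex_intro _ c (fun _ _ => erefl)).
  rewrite /dnorm invr1 powRr1 in h1; last first.
    rewrite big_seq_cond; apply: sumr_ge0 => xi /andP[xC _].
    by apply: mulr_ge0; [exact: ltW (vC _ xC) | exact: powR_ge0].
  have e : \sum_(xi <- C) v xi * `|polyfun c xi| `^ 1 = \sum_(xi <- C) v xi * `|polyfun c xi|.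
    by apply: eq_bigr => xi _; rewrite powRr1.
  rewrite e in h1.
  rewrite ler_pdivlMl //; apply: le_trans h1; apply: ler_wpM2l; first exact: ltW.
  exact: Lam_bound.
have pnE (c : {ffun 'I_q.+1 -> 'I_n.+1} -> R) : pn u (E c) = c1^-1 * \sum_(xi <- C) v xi * `|polyfun c xi|.
  rewrite /pn (big_nth 0) big_mkord mulr_sumr; apply: eq_bigr => i _.
  by rewrite /u /E mxE mulrA.
pose V := fun f => exists c, f = E c.
pose L := fun f => if pselect (V f) is left H then Lam (projT1 (cid H)) else 0.
pose cs := fun (c c' : {ffun 'I_q.+1 -> 'I_n.+1} -> R) => fun a => c a + (-1) * c' a.
have LE (c : {ffun 'I_q.+1 -> 'I_n.+1} -> R) : L (E c) = Lam c.
  rewrite /L; case: pselect => [H|H]; last by exfalso; apply: H; exists c.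
  case: (cid H) => c' /= Ec.
  have d0 : Lam (cs c' c) = 0.
    apply/eqP; rewrite -normr_le0; apply: le_trans (KB _) _.
    rewrite big_seq_cond big1 ?mulr0 // => xi /andP[xC _].
    have [i ->] : exists i : 'I_m, xi = nth 0 C i.
      by exists (Ordinal (im xi xC)); rewrite nth_index.
    have : E c ord0 i = E c' ord0 i by rewrite Ec.
    rewrite /E !mxE /cs polyfunD polyfunZ => ->.
    by rewrite mulN1r subrr normr0 mulr0.
  move: d0; rewrite /cs LamD LamZ; lra.
have Ecs (c c' : {ffun 'I_q.+1 -> 'I_n.+1} -> R) t : E (fun a => c a + t * c' a) = E c + t *: E c'.
  by apply/rowP => i; rewrite !mxE polyfunD polyfunZ.
have GL : goodL u V L.
  split.
  - split.
    + exists (fun _ => 0); apply/rowP => i; rewrite !mxE /polyfun big1 // => a _; exact: mul0r.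
    + move=> f g [c ->] [c' ->]; exists (fun a => c a + 1 * c' a); by rewrite Ecs scale1r.
    + move=> t f [c ->]; exists (fun a => 0 + t * c a).
      have := Ecs (fun _ => 0) c t.
      have -> : E (fun _ => 0) = 0 by apply/rowP => i; rewrite !mxE /polyfun big1 // => a _; exact: mul0r.
      by rewrite add0r => ->.
  - move=> f g [c ->] [c' ->].
    have := Ecs c c' 1; rewrite scale1r => <-.
    by rewrite !LE LamD LamZ mul1r.
  - move=> t f [c ->].
    have := Ecs (fun _ => 0) c t.
    have E0 : E (fun _ => 0) = 0 by apply/rowP => i; rewrite !mxE /polyfun big1 // => a _; exact: mul0r.
    rewrite E0 add0r => <-; rewrite !LE LamD !LamZ.
    have -> : Lam (fun _ : {ffun 'I_q.+1 -> 'I_n.+1} => (0:R)) = 0.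
      transitivity (Lam (fun a => 0 * c a)); first by congr Lam; apply: funext => a; rewrite mul0r.
      by rewrite LamZ mul0r.
    by rewrite add0r.
  - move=> f [c ->]; rewrite LE pnE; exact: le_trans (ler_norm _) (KB c).
have [W' [W'b W'E]] := HB u0 GL.
pose W := fun xi => if @insub _ (fun j => (j < m)%N) 'I_m (index xi C) is Some i then W' i else 0.
have WE (i : 'I_m) : W (nth 0 C i) = W' i.
  rewrite /W; case: insubP => [j _ vj|]; last by rewrite index_uniq ?ltn_ord.
  by congr W'; apply: val_inj; rewrite vj index_uniq.
exists W; split.
  move=> xi xC; have xiE : xi = nth 0 C (Ordinal (im xi xC)) by rewrite nth_index.
  rewrite xiE WE; apply: le_trans (W'b _) _; rewrite /u -xiE; done.
move=> P [c Pc].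
have -> : sph_int P = Lam c.
  by rewrite /Lam !sphE (Cone_ext Pc).
rewrite -LE (W'E _ (ex_intro _ c erefl)) (big_nth 0) big_mkord; apply: eq_bigr => i _.
by rewrite WE /E mxE Pc //; apply: sC; exact: mem_nth.
Qed.
End PartB.

End Aux.
Import Aux.

Theorem lemma6p1 (R : realType) :
  (* (a) *)
  (forall (q n N : nat) (C : seq 'rV[R]_q.+1) (v : 'rV[R]_q.+1 -> R)
          (y : 'I_N.+1 -> 'rV[R]_q.+1 -> R),
     (1 <= q)%N -> (1 <= n)%N ->
     uniq C -> (forall xi, xi \in C -> on_sphere xi) ->
     (forall xi, xi \in C -> 0 < v xi) ->
     sph_onb n y ->
     posdef (gram C v y) ->
     (forall l : 'I_N.+1,
        \sum_(xi <- C) wLSQ C v y xi * y l xi = (l == ord0)%:R) /\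
     (forall w : 'rV[R]_q.+1 -> R,
        (forall l : 'I_N.+1, \sum_(xi <- C) w xi * y l xi = (l == ord0)%:R) ->
        \sum_(xi <- C) (wLSQ C v y xi) ^+ 2 / v xi
          <= \sum_(xi <- C) (w xi) ^+ 2 / v xi)) /\
  (* (b) *)
  (exists c : R -> R,
   forall (q n : nat) (C : seq 'rV[R]_q.+1) (v : 'rV[R]_q.+1 -> R) (c1 c2 : R),
     (1 <= q)%N -> (1 <= n)%N ->
     uniq C -> (forall xi, xi \in C -> on_sphere xi) ->
     (forall xi, xi \in C -> 0 < v xi) ->
     0 < c1 -> 0 < c2 ->
     (forall (p : \bar R) (P : 'rV[R]_q.+1 -> R), (1 <= p)%E -> in_Pi n P ->
        c1 * Lpnorm p P <= dnorm C v p P /\ dnorm C v p P <= c2 * Lpnorm p P) ->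
     exists W : 'rV[R]_q.+1 -> R,
       (forall xi, xi \in C -> `|W xi| <= c c1 * v xi) /\
       (forall P, in_Pi n P -> \sum_(xi <- C) W xi * P xi = sph_int P)).
Proof.
Proof.
split.
- move=> q n N C v y _ _ _ _ vC _ pd; exact: partA vC pd.
- exists (fun c1 => c1^-1) => q n C v c1 c2 _ _ uC sC vC c10 _ hyp.
  exact: partB uC sC vC c10 hyp.
Qed.
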